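(* Let $\mathbf{x}_{-1}=(\mathbf{x}_2,\dots,\mathbf{x}_p)$ be a zero-mean Gaussian row vector with nonsingular covariance $\Sigma_{-1,-1}$. Fix $S\subset\{2,\dots,p\}$ and $\lambda^\sharp>0$. Let $w\in\mathbb{R}^{p-1}$ have strictly positive entries with $\|w\|_\infty\le1$, let $W$ be the diagonal matrix with diagonal $w$, let $$c^0\in\arg\min\big\{\|\Sigma_{-1,-1}^{1/2}c\|_2^2:\ c\in\mathbb{R}^{p-1},\ \lambda^\sharp\|(Wc)_{-S}\|_1=1\big\},$$ and define $\zeta\in\mathbb{R}^{p-1}$ by $\zeta_j:=0$ for $j\in S$ and $\zeta_j:={\rm sign}(c^0_j)$ for $j\notin S$. Then $\mathbf{x}_{-1}c^0$ is orthogonal to (i.e. independent of) $\mathbf{x}_S$. Moreover $$\|\Sigma_{-1,-1}c^0\|_\infty=\frac{\|w_{-S}\|_\infty}{\lambda^\sharp\|\Sigma_{-1,-1}^{-1/2}W\zeta\|_2^2},\qquad \|\Sigma_{-1,-1}^{1/2}c^0\|_2^2=\frac{1}{\lambda^{\sharp2}\|\Sigma_{-1,-1}^{-1/2}W\zeta\|_2^2}.$$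
   Context: Vectors in $\mathbb{R}^{p-1}$ are indexed by $\{2,\dots,p\}$; for $S\subset\{2,\dots,p\}$, $-S:=\{2,\dots,p\}\setminus S$ and $v_{-S}$ denotes the vector $v$ with entries in $S$ set to zero (or the corresponding subvector). $\mathbf{x}_S=\{\mathbf{x}_j\}_{j\in S}$. *)

(* Defs.v *)
From mathcomp Require Import all_boot all_order all_algebra.
From mathcomp Require Import reals.
Set Implicit Arguments. Unset Strict Implicit. Unset Printing Implicit Defensive.
Import Order.TTheory GRing.Theory Num.Theory.
Local Open Scope ring_scope.

(* Coordinates {2,...,p} are re-indexed as 'I_n with n = p - 1. *)

(* Quadratic form v^T A v.  For A = Sigma (symmetric positive definite),
   quad Sigma c = ||Sigma^{1/2} c||_2^2 and quad (invmx Sigma) v = ||Sigma^{-1/2} v||_2^2. *)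
Definition quad (R : realType) (n : nat) (A : 'M[R]_n) (v : 'cV[R]_n) : R :=
  (v^T *m A *m v) 0 0.

Definition linf (R : realType) (n : nat) (v : 'cV[R]_n) : R :=
  \big[Num.max/0]_(j < n) `|v j 0|.

Definition linf_out (R : realType) (n : nat) (S : {set 'I_n}) (v : 'cV[R]_n) : R :=
  \big[Num.max/0]_(j < n | j \notin S) `|v j 0|.

Definition l1_out (R : realType) (n : nat) (S : {set 'I_n}) (v : 'cV[R]_n) : R :=
  \sum_(j < n | j \notin S) `|v j 0|.

Definition posdef (R : realType) (n : nat) (Sigma : 'M[R]_n) : Prop :=
  Sigma^T = Sigma /\ forall v : 'cV[R]_n, v != 0 -> 0 < quad Sigma v.

Definition is_argmin_c0 (R : realType) (n : nat) (Sigma W : 'M[R]_n)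
    (S : {set 'I_n}) (lam : R) (c0 : 'cV[R]_n) : Prop :=
  lam * l1_out S (W *m c0) = 1 /\
  forall c : 'cV[R]_n, lam * l1_out S (W *m c) = 1 -> quad Sigma c0 <= quad Sigma c.

Definition zeta_of (R : realType) (n : nat) (S : {set 'I_n}) (c0 : 'cV[R]_n) : 'cV[R]_n :=
  \col_(j < n) (if j \in S then 0 else Num.sg (c0 j 0)).

(* Covariance of the scalar x_{-1} c with the coordinate x_j for a zero-mean
   vector with covariance Sigma: E[(x c) x_j] = (Sigma c)_j. *)
Definition cov_lin_coord (R : realType) (n : nat) (Sigma : 'M[R]_n) (c : 'cV[R]_n) (j : 'I_n) : R :=
  (Sigma *m c) j 0.

(* Main.v *)
Set Warnings "-notation-overridden,-ambiguous-paths,-parsing,-coercions".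
Require Import Defs.
From mathcomp Require Import all_boot all_order all_algebra.
From mathcomp Require Import reals.
From mathcomp Require Import ring lra.
Import Order.TTheory GRing.Theory Num.Theory.
Local Open Scope ring_scope.

Section H.
Variables (R : realType) (n : nat) (Sigma : 'M[R]_n).
Hypothesis Ssym : Sigma^T = Sigma.

Definition B (x y : 'cV[R]_n) : R := (x^T *m Sigma *m y) 0 0.

Lemma B_sym x y : B x y = B y x.
Proof.
have E (M : 'M[R]_1) : M 0 0 = M^T 0 0 by rewrite mxE.
by rewrite /B E !trmx_mul trmxK Ssym mulmxA.
Qed.

Lemma quad_expand x y t :
  quad Sigma (x + t *: y) = quad Sigma x + 2 * t * B x y + t ^+ 2 * quad Sigma y.
Proof.
rewrite /quad; have -> : (x + t *: y)^T = x^T + t *: y^T by rewrite linearD /= linearZ.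
rewrite !mulmxDl !mulmxDr -!scalemxAl -!scalemxAr.
have aE (A C : 'M[R]_1) : (A + C) 0 0 = A 0 0 + C 0 0 by rewrite mxE.
have sE a (A : 'M[R]_1) : (a *: A) 0 0 = a * A 0 0 by rewrite mxE.
rewrite !aE !sE.
rewrite -/(B x y) -/(B y x) B_sym /B; lra.
Qed.

Lemma B_delta j c : B (delta_mx j 0) c = (Sigma *m c) j 0.
Proof.
rewrite /B trmx_delta -mulmxA -rowE mxE.
by [].
Qed.
End H.

Lemma quadZ (R : realType) (n : nat) (A : 'M[R]_n) a v :
  quad A (a *: v) = a ^+ 2 * quad A v.
Proof.
rewrite /quad; have -> : (a *: v)^T = a *: v^T by rewrite linearZ.
rewrite -scalemxAl -scalemxAl -scalemxAr scalerA.
by rewrite [in LHS]mxE expr2.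
Qed.

Lemma lin_zero (R : realType) (a b : R) :
  (forall t, 0 <= 2 * t * b + t ^+ 2 * a) -> b = 0.
Proof.
move=> H; apply/eqP; apply/negPn/negP => bnz.
set k := `|a| + 1.
have k0 : 0 < k by rewrite /k ltr_wpDl.
have := H (- b / k).
have tk : (- b / k) * k = - b by rewrite mulfVK // gt_eqF.
set t := - b / k in tk *.
have b2 : 0 < b ^+ 2 by rewrite exprn_even_gt0.
have ha : a <= `|a| by apply: ler_norm.
move=> f.
have : 0 <= (2 * t * b + t ^+ 2 * a) * k ^+ 2 by apply: mulr_ge0 => //; apply: exprn_ge0; apply: ltW.
have -> : (2 * t * b + t ^+ 2 * a) * k ^+ 2 = 2 * (t * k) * b * k + (t * k) ^+ 2 * a by ring.
rewrite tk /k.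
have -> : 2 * - b * b * (`|a| + 1) + (- b) ^+ 2 * a = b ^+ 2 * (a - 2 * (`|a| + 1)) by ring.
have := normr_ge0 a. rewrite pmulr_rge0 //; lra.
Qed.

Lemma sg_mul_self (R : realType) (x : R) : Num.sg x * x = `|x|.
Proof. by case: sgrP => _; rewrite ?mul0r ?mul1r ?mulN1r. Qed.

Theorem lemma3p9 (R : realType) (n : nat) (Sigma : 'M[R]_n) (S : {set 'I_n})
    (lam : R) (w : 'cV[R]_n) (c0 : 'cV[R]_n) :
  posdef Sigma ->
  0 < lam ->
  (forall j, 0 < w j 0) ->
  linf w <= 1 ->
  is_argmin_c0 Sigma (diag_mx w^T) S lam c0 ->
  let zeta := zeta_of S c0 in
  let W := diag_mx w^T in
  (forall j, j \in S -> cov_lin_coord Sigma c0 j = 0) /\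
  linf (Sigma *m c0) = linf_out S w / (lam * quad (invmx Sigma) (W *m zeta)) /\
  quad Sigma c0 = 1 / (lam ^+ 2 * quad (invmx Sigma) (W *m zeta)).
Proof.
move=> [Ssym Spd] lam0 wpos _ [Nc0 opt] zeta W.
set m := quad Sigma c0.
have q00 : quad Sigma 0 = 0 by rewrite /quad mulmx0 mxE.
have q0 c : 0 <= quad Sigma c.
  by case: (eqVneq c 0) => [->|cnz]; [rewrite q00 | apply: ltW; apply: Spd].
have WE c j : (W *m c) j 0 = w j 0 * c j 0 by rewrite /W mul_diag_mx !mxE.
have Nd c : l1_out S (W *m c) = \sum_(j < n | j \notin S) `|w j 0| * `|c j 0|.
  by rewrite /l1_out; apply: eq_bigr => j _; rewrite WE normrM.
have Nge0 c : 0 <= l1_out S (W *m c) by rewrite /l1_out sumr_ge0.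
have Nscale a c : l1_out S (W *m (a *: c)) = `|a| * l1_out S (W *m c).
  rewrite !Nd mulr_sumr; apply: eq_bigr => j _; rewrite mxE normrM; ring.
have optv c : lam ^+ 2 * m * (l1_out S (W *m c)) ^+ 2 <= quad Sigma c.
  set Nc := l1_out S (W *m c).
  case: (eqVneq Nc 0) => [->|Nnz]; first by rewrite expr0n /= mulr0.
  have Kp : 0 < lam * Nc by rewrite mulr_gt0 // lt_def Nnz Nge0.
  have := opt ((lam * Nc)^-1 *: c).
  rewrite Nscale -/Nc gtr0_norm ?invr_gt0 // quadZ.
  have -> : lam * ((lam * Nc)^-1 * Nc) = 1 by field; rewrite Nnz gt_eqF.
  move=> /(_ erefl) hm.
  have : (lam * Nc) ^+ 2 * m <= (lam * Nc) ^+ 2 * ((lam * Nc)^-1 ^+ 2 * quad Sigma c).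
    by rewrite ler_wpM2l // exprn_ge0 // ltW.
  rewrite mulrA -exprMn divff ?gt_eqF // expr1n mul1r.
  by have -> : (lam * Nc) ^+ 2 * m = lam ^+ 2 * m * Nc ^+ 2 by ring.
have c0nz : c0 != 0.
  apply/eqP => c00; move: Nc0; rewrite c00 -(scale0r 0) Nscale normr0 !mul0r.
  by rewrite mulr0 => /eqP; rewrite eq_sym oner_eq0.
have m0 : 0 < m by apply: Spd.
have key (s : 'cV[R]_n) : (forall j, j \in S -> s j 0 = 0) ->
    (forall j, j \notin S -> s j 0 * c0 j 0 = `|c0 j 0|) ->
    (forall j, `|s j 0| <= 1) ->
    forall j, (Sigma *m c0) j 0 = lam * m * (w j 0 * s j 0).
  move=> sS sc s1 j.
  pose L (c : 'cV[R]_n) := \sum_(i < n) w i 0 * s i 0 * c i 0.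
  have hL c : `|L c| <= l1_out S (W *m c).
    rewrite Nd; apply: le_trans (ler_norm_sum _ _ _) _.
    rewrite (bigID (fun i => i \in S)) /= big1 ?add0r; last first.
      by move=> i iS; rewrite sS // mulr0 mul0r normr0.
    apply: ler_sum => i _; rewrite !normrM -mulrA ler_wpM2l //.
    by rewrite ler_piMl // normr_ge0.
  have hL0 : L c0 = l1_out S (W *m c0).
    rewrite Nd /L (bigID (fun i => i \in S)) /= big1 ?add0r; last first.
      by move=> i iS; rewrite sS // mulr0 mul0r.
    by apply: eq_bigr => i iS; rewrite -mulrA sc // (gtr0_norm (wpos i)).
  have hLt t : L (c0 + t *: delta_mx j 0) = L c0 + t * (w j 0 * s j 0).
    rewrite /L; under eq_bigr => i _ do rewrite !mxE mulrDr.
    rewrite big_split /=; congr (_ + _).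
    rewrite (bigD1 j) //= eqxx /= big1 ?addr0; first ring.
    by move=> i /negbTE ->; rewrite /= !mulr0.
  apply/eqP; rewrite -subr_eq0; apply/eqP.
  apply: (@lin_zero _ (quad Sigma (delta_mx j 0) - lam ^+ 2 * m * (w j 0 * s j 0) ^+ 2)).
  move=> t.
  have h1 := optv (c0 + t *: delta_mx j 0).
  rewrite quad_expand // B_sym // B_delta // -/m in h1.
  have h2 := hL (c0 + t *: delta_mx j 0).
  rewrite hLt hL0 in h2.
  set N0 := l1_out S (W *m c0) in Nc0 h2 hL0.
  set N1 := l1_out S (W *m (c0 + t *: delta_mx j 0)) in h1 h2.
  set u := w j 0 * s j 0 in h2 *.
  set b := (Sigma *m c0) j 0 in h1 *.
  set a := quad Sigma (delta_mx j 0) in h1 *.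
  have h3 : (N0 + t * u) ^+ 2 <= N1 ^+ 2.
    have N1g : 0 <= N1 by apply: Nge0.
    by rewrite -(real_normK (num_real (N0 + t * u))) ler_pXn2r // ?nnegrE ?normr_ge0.
  have h4 : lam ^+ 2 * m * (N0 + t * u) ^+ 2 <= lam ^+ 2 * m * N1 ^+ 2.
    by rewrite ler_wpM2l // mulr_ge0 ?exprn_ge0 ?ltW.
  have e : lam ^+ 2 * m * (N0 + t * u) ^+ 2 =
     m * (lam * N0) ^+ 2 + 2 * t * (lam * m * u) * (lam * N0) + t ^+ 2 * (lam ^+ 2 * m * u ^+ 2) by ring.
  rewrite e Nc0 in h4.
  have e2 : 2 * t * (b - lam * m * u) + t ^+ 2 * (a - lam ^+ 2 * m * u ^+ 2) =
    (m + 2 * t * b + t ^+ 2 * a) - (m * 1 ^+ 2 + 2 * t * (lam * m * u) * 1 + t ^+ 2 * (lam ^+ 2 * m * u ^+ 2)) by ring.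
  rewrite e2 subr_ge0; exact: le_trans h4 h1.
have nz j : j \notin S -> c0 j 0 != 0.
  move=> jS; apply/negP => /eqP cj0.
  pose sv (sig : R) : 'cV[R]_n :=
    \col_i (if i \in S then 0 else if c0 i 0 == 0 then sig else Num.sg (c0 i 0)).
  have hyp sig : `|sig| = 1 -> forall i, (Sigma *m c0) i 0 = lam * m * (w i 0 * sv sig i 0).
    move=> hs; apply: key => i; rewrite mxE.
    - by move=> ->.
    - move=> /negbTE ->; case: (eqVneq (c0 i 0) 0) => [->|nzi]; first by rewrite mulr0 normr0.
      exact: sg_mul_self.
    - case: (i \in S); first by rewrite normr0.
      case: (c0 i 0 == 0); first by rewrite hs.
      by rewrite normr_sg; case: (_ != 0).
  have e1 := hyp 1 (normr1 _) j.
  have e2 := hyp (-1) (normrN1 _) j.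
  rewrite e1 !mxE (negbTE jS) cj0 eqxx mulr1 mulrN1 in e2.
  have p : 0 < lam * m * w j 0 by rewrite !mulr_gt0.
  by move: e2; rewrite mulrN; lra.
have Sc j : (Sigma *m c0) j 0 = lam * m * (w j 0 * zeta j 0).
  apply: key => i; rewrite /zeta /zeta_of mxE.
  - by move=> ->.
  - by move=> /negbTE ->; apply: sg_mul_self.
  - case: (i \in S); first by rewrite normr0.
    by rewrite normr_sg; case: (_ != 0).
have Sc' : Sigma *m c0 = (lam * m) *: (W *m zeta).
  by apply/matrixP => i k; rewrite (ord1 k) Sc [RHS]mxE WE.
have Su : Sigma \in unitmx.
  rewrite unitmxE unitfE; apply/negP => /det0P [v vnz vS].
  have := Spd v^T; rewrite trmx_eq0 vnz /quad trmxK vS mul0mx mxE => /(_ isT).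
  by rewrite ltxx.
have lm0 : lam * m != 0 by rewrite mulf_neq0 // gt_eqF.
have WZ : W *m zeta = (lam * m)^-1 *: (Sigma *m c0).
  by rewrite Sc' scalerA mulVf // scale1r.
have QE : quad (invmx Sigma) (W *m zeta) = (lam * m)^-1 ^+ 2 * m.
  rewrite WZ quadZ; congr (_ * _).
  by rewrite /quad trmx_mul Ssym -mulmxA (mulKmx Su).
split.
  by move=> j jS; rewrite /cov_lin_coord Sc /zeta /zeta_of mxE jS !mulr0.
split; last first.
  rewrite QE; field; rewrite gt_eqF // ?mulf_neq0 // gt_eqF //.
have hk : 0 <= lam * m by rewrite mulr_ge0 // ltW.
have LHS : linf (Sigma *m c0) = lam * m * linf_out S w.
  rewrite /linf /linf_out.
  rewrite [RHS](big_morph (fun x => lam * m * x) (fun y z => @maxr_pMr R (lam * m) y z hk) (mulr0 _)).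
  rewrite [RHS]bigmax_mkcond.
  apply: eq_bigr => j _; rewrite Sc normrM (ger0_norm hk) normrM /zeta /zeta_of mxE.
  case: ifP => jS /=; first by rewrite normr0 !mulr0.
  by rewrite normr_sg nz ?jS // mulr1.
rewrite LHS QE; field; rewrite gt_eqF // ?mulf_neq0 // gt_eqF //.
Qed.
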